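(* Let $\Pi(0)\subsetneq\Pi(1)\subsetneq\cdots\subsetneq\Pi(t-1)$ be fixed subspaces of $\mathbb{F}_q^n$ with $\dim\Pi(j)=d_j$. For $x\in\{u,v\}$ and $j=1,\dots,t$, let $\pi_x(j)$ be the span of $k_x(j)$ vectors chosen uniformly at random from $\Pi(j-1)$, all these draws (over $x$, $j$ and the individual vectors) being mutually independent, where the integers $k_x(j)$ satisfy $1\le k_x(1)<d_0$ and $k_x(j)\le d_{j-1}-d_{j-2}$ for $j=2,\dots,t$. Put $\Pi_x(i)=\sum_{j=1}^i\pi_x(j)$. Then with probability $1-O(q^{-1})$, \[ \Pi_u(i)\not\subseteq\Pi_v(j)\quad\text{and}\quad\Pi_v(j)\not\subseteq\Pi_u(i)\qquad\text{for all } i,j\in\{1,\dots,t\}. \]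
   Context: $O(\cdot)$ refers to $q\to\infty$ with $n,t$ and all dimensions and numbers $k_x(j)$ fixed. *)

(* Defs.v *)
From HB Require Import structures.
From mathcomp Require Import all_boot all_order all_algebra.
Set Implicit Arguments. Unset Strict Implicit. Unset Printing Implicit Defensive.
Import Order.TTheory GRing.Theory Num.Theory.

(* Indices: x : bool (true = u, false = v); paper's j = 1..t is j : 'I_t
   (paper index j+1), drawn from Pi(j) (paper's Pi(j-1) after shift).
   A draw is a finite function w : bool * 'I_t * 'I_n -> F^n; the i-th vector
   of pi_x(j) is w (x,j,i) for i < k x j; unused slots are padded by 0. *)

Definition draw (F : finFieldType) (n t : nat) :=
  {ffun bool * 'I_t * 'I_n -> 'rV[F]_n}.

(* Valid draws: every used vector lies in Pi(j), every unused slot is 0.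
   The uniform distribution on valid draws is exactly the product of
   independent uniform draws from the subspaces. *)
Definition valid_draw (F : finFieldType) (n t : nat)
    (Pi : 'I_t -> 'M[F]_n) (k : bool -> 'I_t -> nat) (w : draw F n t) : bool :=
  [forall x : bool, forall j : 'I_t, forall i : 'I_n,
     if (i < k x j)%N then (w (x, j, i) <= Pi j)%MS else w (x, j, i) == (0 : 'rV[F]_n)%R].

Definition pispan (F : finFieldType) (n t : nat) (k : bool -> 'I_t -> nat)
    (w : draw F n t) (x : bool) (j : 'I_t) : 'M[F]_n :=
  (\sum_(i < n | (i < k x j)%N) <<w (x, j, i)>>)%MS.

Definition Pispan (F : finFieldType) (n t : nat) (k : bool -> 'I_t -> nat)
    (w : draw F n t) (x : bool) (i : 'I_t) : 'M[F]_n :=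
  (\sum_(j < t | (j <= i)%N) pispan k w x j)%MS.

Definition bad_draw (F : finFieldType) (n t : nat) (k : bool -> 'I_t -> nat)
    (w : draw F n t) : bool :=
  [exists i : 'I_t, exists j : 'I_t,
     (Pispan k w true i <= Pispan k w false j)%MS
     || (Pispan k w false j <= Pispan k w true i)%MS].

Definition prob_bad (F : finFieldType) (n t : nat)
    (Pi : 'I_t -> 'M[F]_n) (k : bool -> 'I_t -> nat) : rat :=
  (#|[set w : draw F n t | valid_draw Pi k w && bad_draw k w]|%:R
   / #|[set w : draw F n t | valid_draw Pi k w]|%:R)%R.

(* Main.v *)
Require Import Defs.
From HB Require Import structures.
From mathcomp Require Import all_boot all_order all_algebra.
From mathcomp Require Import zify.
Import Order.TTheory GRing.Theory Num.Theory.
Set Implicit Arguments. Unset Strict Implicit. Unset Printing Implicit Defensive.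
Local Open Scope ring_scope.

Section Count.
Variables (F : finFieldType) (n t : nat) (Pi : 'I_t -> 'M[F]_n) (k : bool -> 'I_t -> nat).

Lemma exists_out (m : nat) (A : 'M[F]_n) (M : 'M[F]_(m, n)) : ~~ (A <= M)%MS ->
  exists z : 'rV[F]_n, (z <= A)%MS && ~~ (z <= M)%MS.
Proof.
move=> nAM; apply/existsP; apply: contraR nAM => /existsPn H.
apply/rV_subP => v vA; move: (H v); rewrite vA /=; by case: (v <= M)%MS.
Qed.

Definition zout (A : 'M[F]_n) (M : 'M[F]_n) : 'rV[F]_n :=
  odflt (0 : 'rV[F]_n)%R [pick z : 'rV[F]_n | (z <= A)%MS && ~~ (z <= M)%MS].

Lemma zoutP (A M : 'M[F]_n) : ~~ (A <= M)%MS ->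
  (zout A M <= A)%MS && ~~ (zout A M <= M)%MS.
Proof.
move=> nAM; rewrite /zout; case: pickP => [z -> //|H].
have [z Hz] := exists_out nAM; by move: (H z); rewrite Hz.
Qed.

Lemma count_coord (c : bool * 'I_t * 'I_n) (V : draw F n t -> 'M[F]_n) :
  (c.2 < k c.1.1 c.1.2)%N ->
  (forall w w' : draw F n t, (forall c', c' != c -> w c' = w' c') -> V w = V w') ->
  (forall w, ~~ (Pi c.1.2 <= V w)%MS) ->
  (#|[set w : draw F n t | valid_draw Pi k w && (w c <= V w)%MS]| * #|F|
     <= #|[set w : draw F n t | valid_draw Pi k w]|)%N.
Proof.
move=> hc hV hP.
set A := [set w : draw F n t | valid_draw Pi k w && (w c <= V w)%MS].
pose f (p : draw F n t * F) : draw F n t :=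
  [ffun c' => if c' == c then (p.1 c + p.2 *: zout (Pi c.1.2) (V p.1))%R else p.1 c'].
have <- : #|setX A [set: F]| = (#|A| * #|F|)%N by rewrite cardsX cardsT.
rewrite -(card_in_imset (f := f)); last first.
  move=> [w a] [w' a'] /setXP [] /=; rewrite inE => /andP [_ wV] _.
  move=> /setXP [] /=; rewrite inE => /andP [_ wV'] _ eqf.
  have off : forall c', c' != c -> w c' = w' c'.
    move=> c' nc; move/ffunP: eqf => /(_ c'); rewrite !ffunE (negbTE nc) //.
  have eV := hV _ _ off.
  move/ffunP: eqf => /(_ c); rewrite !ffunE eqxx /= -eV => e.
  set z := zout _ _ in e.
  have /andP [_ nz] := zoutP (hP w).
  have ea : a = a'.
    apply/eqP; apply: contraR nz => naa.
    have : ((a - a') *: z <= V w)%MS.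
      have -> : ((a - a') *: z = w' c - w c)%R.
        rewrite scalerBl (canRL (addrK (a' *: z)) (esym e)).
        by rewrite -(addrA (w c)) addrC addrK.
      by apply: addmx_sub; rewrite ?eqmx_opp // eV.
    move/(scalemx_sub (a - a')^-1); rewrite scalerA mulVf ?subr_eq0 // scale1r.
    by [].
  subst a'; move/addIr: e => e.
  congr pair; apply/ffunP => c'; case: (eqVneq c' c) => [->//|nc]; exact: off.
apply: subset_leq_card; apply/subsetP => y /imsetP [[w a] Hwa ->].
move/setXP: Hwa => [] /=; rewrite inE => /andP [vw _] _.
rewrite inE; apply/forallP => x; apply/forallP => j; apply/forallP => i.
rewrite ffunE; case: eqP => [ec|nc].
  move: vw => /forallP /(_ x) /forallP /(_ j) /forallP /(_ i).
  rewrite -ec /= in hc *; rewrite hc => wi.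
  have /andP [zP _] := zoutP (hP w).
  apply: addmx_sub => //; apply: scalemx_sub; by rewrite -ec in zP.
by move: vw => /forallP /(_ x) /forallP /(_ j) /forallP /(_ i).
Qed.
End Count.
Section LA.
Variables (F : fieldType) (n : nat).

Lemma addv_cap0 (D B : 'M[F]_n) (v : 'rV[F]_n) :
  (D :&: B <= (0 : 'M[F]_n))%MS -> ~~ (v <= D + B)%MS -> (D :&: (<<v>> + B) <= (0 : 'M[F]_n))%MS.
Proof.
move=> h0 nv.
have r0 : \rank (D :&: B) = 0%N by apply/eqP; rewrite mxrank_eq0 -submx0.
have e1 := mxrank_sum_cap D (<<v>> + B)%MS.
have e2 := mxrank_sum_cap D B.
have h3 : (\rank (<<v>> + B) <= 1 + \rank B)%N.
  apply: leq_trans (mxrank_adds_leqif _ _).1 _; rewrite leq_add2r mxrank_gen.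
  exact: rank_leq_row.
have h4 : (\rank (D + B) < \rank (D + (<<v>> + B)))%N.
  apply: rank_ltmx; rewrite ltmxE; apply/andP; split.
    by apply: addsmxS => //; exact: addsmxSr.
  apply: contra nv => h; apply: submx_trans h.
  apply: (submx_trans _ (addsmxSr D _)); apply: (submx_trans _ (addsmxSl _ B)).
  by rewrite genmxE.
have : \rank (D :&: (<<v>> + B)) = 0%N by lia.
by move/eqP; rewrite mxrank_eq0 -submx0.
Qed.

Lemma cap_shift (A B C D : 'M[F]_n) :
  (A :&: D <= (0 : 'M[F]_n))%MS -> (B <= D)%MS -> (C <= D)%MS -> ((A + B) :&: C <= B :&: C)%MS.
Proof.
move=> hA hB hC; rewrite sub_capmx capmxSr andbT.
apply: submx_trans (capmxS (submx_refl (A + B)%MS) hC) _.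
rewrite addsmxC -(matrix_modl A hB).
apply: submx_trans (addsmxS (submx_refl B) hA) _.
by rewrite addsmx0.
Qed.

Lemma sum_split N (G : 'I_N -> 'M[F]_n) (P : pred 'I_N) m (hm : (m < N)%N) :
  (\sum_(i < N | (i < m.+1)%N && P i) G i)%MS =
  if P (Ordinal hm) then (G (Ordinal hm) + \sum_(i < N | (i < m)%N && P i) G i)%MS
  else (\sum_(i < N | (i < m)%N && P i) G i)%MS.
Proof.
case: ifP => hP.
  rewrite (bigD1 (Ordinal hm)) /= ?ltnSn ?hP //; congr addsmx.
  apply: eq_bigl => i; rewrite ltnS -val_eqE /= andbC andbA; congr andb.
  by rewrite ltn_neqAle.
apply: eq_bigl => i; rewrite ltnS leq_eqVlt; case: (eqVneq (val i) m) => /= [ei|//].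
have -> : i = Ordinal hm by apply: val_inj. 
by rewrite hP andbF.
Qed.

Lemma rank_sum_gen N (f : 'I_N -> 'rV[F]_n) (P : pred 'I_N) m :
  (\rank (\sum_(i < N | (i < m)%N && P i) <<f i>>)%MS <= m)%N.
Proof.
elim: m => [|m IH].
  by rewrite big_pred0 ?mxrank0 // => i.
case: (ltnP m N) => hm.
  rewrite sum_split; case: ifP => _; last exact: leqW.
  apply: leq_trans (mxrank_adds_leqif _ _).1 _; rewrite mxrank_gen.
  by rewrite -(add1n m) leq_add ?rank_leq_row.
rewrite (eq_bigl (fun i : 'I_N => (i < m)%N && P i)); first exact: leqW.
move=> i; rewrite ltnS; have := ltn_ord i => hi.
by rewrite (leq_trans hi hm) (leq_trans (ltnW hi) hm).
Qed.
End LA.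

Section Main.
Variables (F : finFieldType) (n t : nat) (d : 'I_t -> nat) (k : bool -> 'I_t -> nat)
  (Pi : 'I_t -> 'M[F]_n).
Hypothesis hk1 : forall (x : bool) (j : 'I_t), nat_of_ord j = 0%N ->
           (1 <= k x j)%N /\ (k x j < d j)%N.
Hypothesis hk2 : forall (x : bool) (j j' : 'I_t), nat_of_ord j = j'.+1 ->
           (k x j <= d j - d j')%N.
Hypothesis hrank : forall j : 'I_t, \rank (Pi j) = d j.
Hypothesis hmono : forall i j : 'I_t, (i < j)%N -> (Pi i < Pi j)%MS.

Definition predI (j : 'I_t) : 'I_t := Ordinal (leq_ltn_trans (leq_pred j) (ltn_ord j)).

Definition Sm (w : draw F n t) (y : bool) (j : 'I_t) (m : nat) : 'M[F]_n :=
  (\sum_(i < n | (i < m)%N && true) <<w (y, j, i)>>)%MS.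

Definition Vj w y j m := (Pi (predI j) + Sm w y j m)%MS.

Definition Valy (w : draw F n t) (y : bool) : bool :=
  [forall j : 'I_t, forall i : 'I_n, (i < k y j)%N ==> (w (y, j, i) <= Pi j)%MS].

Definition Gd0 (w : draw F n t) (y : bool) : bool :=
  [forall j : 'I_t, forall m : 'I_n,
     ((0 < j)%N && (m < k y j)%N) ==> ~~ (w (y, j, m) <= Vj w y j m)%MS].

Definition Gd w y := Valy w y && Gd0 w y.

Definition Pall (w : draw F n t) (y : bool) : 'M[F]_n := (\sum_(j < t) pispan k w y j)%MS.

Definition Vc (c : bool * 'I_t * 'I_n) (w : draw F n t) : 'M[F]_n :=
  let: (x, j, m) := c in
  if (j == 0 :> nat) then (if Gd w (~~ x) then Pall w (~~ x) else 0) else Vj w x j m.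

Definition condc (c : bool * 'I_t * 'I_n) : bool :=
  let: (x, j, m) := c in (m < k x j)%N && ((j == 0 :> nat) ==> (m == 0 :> nat)).

Lemma Pi_mono (a b : 'I_t) : (a <= b)%N -> (Pi a <= Pi b)%MS.
Proof.
rewrite leq_eqVlt; case/orP => [/eqP e|h]; last exact: ltmxW (hmono h).
by have -> : a = b by apply: val_inj.
Qed.

Lemma dep_y (w w' : draw F n t) y :
  (forall j m, w (y, j, m) = w' (y, j, m)) ->
  Gd w y = Gd w' y /\ Pall w y = Pall w' y.
Proof.
move=> h.
have eS : forall j m, Sm w y j m = Sm w' y j m.
  by move=> j m; apply: eq_bigr => i _; rewrite h.
split.
  rewrite /Gd /Valy /Gd0; congr andb.
    by apply: eq_forallb => j; apply: eq_forallb => m; rewrite h.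
  apply: eq_forallb => j; apply: eq_forallb => m.
  by rewrite /Vj eS h.
apply: eq_bigr => j _; apply: eq_bigr => i _; by rewrite h.
Qed.

Lemma Vc_dep c (w w' : draw F n t) :
  (forall c', c' != c -> w c' = w' c') -> Vc c w = Vc c w'.
Proof.
case: c => [[x j] m] h /=.
case: ifP => _.
  have [-> -> //] : Gd w (~~ x) = Gd w' (~~ x) /\ Pall w (~~ x) = Pall w' (~~ x).
  apply: dep_y => j' m'; apply: h; apply/negP => /eqP [] /eqP; by case: x.
rewrite /Vj /Sm; congr addsmx; apply: eq_bigr => i /andP [hi _]; rewrite h //.
apply/negP => /eqP [] ei; by rewrite ei ltnn in hi.
Qed.

Lemma pispan_sub (w : draw F n t) y j : Valy w y -> (pispan k w y j <= Pi j)%MS.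
Proof.
move=> vw; apply/sumsmx_subP => i hi; rewrite genmxE.
by move: vw => /forallP /(_ j) /forallP /(_ i); rewrite hi.
Qed.

Lemma rank_pispan (w : draw F n t) y j : (\rank (pispan k w y j) <= k y j)%N.
Proof.
rewrite /pispan (eq_bigl (fun i : 'I_n => (i < k y j)%N && true)); last by move=> i; rewrite andbT.
exact: rank_sum_gen.
Qed.

Lemma cap0 (w : draw F n t) y (j : 'I_t) : Gd0 w y -> (0 < j)%N ->
  (Pi (predI j) :&: pispan k w y j <= (0 : 'M[F]_n))%MS.
Proof.
move=> hG hj.
have claim : forall m, (m <= n)%N ->
  (Pi (predI j) :&: \sum_(i < n | (i < m)%N && (i < k y j)%N) <<w (y, j, i)>> <= (0 : 'M[F]_n))%MS.
  elim => [|m IH] hm.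
    by rewrite big_pred0 ?capmx0 ?sub0mx // => i.
  rewrite (sum_split (fun i : 'I_n => <<w (y, j, i)>>%MS) (fun i : 'I_n => (i < k y j)%N) hm).
  case: ifP => hk; last exact: IH (ltnW hm).
  apply: addv_cap0; first exact: IH (ltnW hm).
  move: hG => /forallP /(_ j) /forallP /(_ (Ordinal hm)); rewrite hj hk /= /Vj /Sm.
  apply: contra => h; apply: submx_trans h _; apply: addsmxS => //.
  apply/sumsmx_subP => i /andP [hi _]; apply: (sumsmx_sup i) => //; by rewrite hi.
have := claim n (leqnn n).
rewrite (eq_bigl (fun i : 'I_n => (i < k y j)%N)) // => i; by rewrite ltn_ord.
Qed.

Lemma key (w : draw F n t) y (j0 : 'I_t) : Gd w y -> nat_of_ord j0 = 0%N ->
  ~~ (Pi j0 <= Pall w y)%MS.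
Proof.
move=> /andP [vw hG] hj0.
have claim : forall i, (0 < i)%N -> (i <= t)%N ->
  ((\sum_(j < t | (j < i)%N && true) pispan k w y j) :&: Pi j0 <= pispan k w y j0)%MS.
  elim => [//|i IH] _ hit.
  rewrite (sum_split (pispan k w y) (fun _ => true) hit) /=.
  case: (posnP i) => [i0|ip].
    subst i; rewrite big_pred0 // addsmx0_id.
    have -> : Ordinal hit = j0 by apply: val_inj => /=; rewrite hj0.
    exact: capmxSl.
  apply: (submx_trans _ (IH ip (ltnW hit))).
  apply: (@cap_shift _ _ _ _ _ (Pi (predI (Ordinal hit)))).
  - rewrite capmxC; exact: cap0.
  - apply/sumsmx_subP => j /andP [hj _]; apply: submx_trans (@pispan_sub w y j vw) _.
    apply: Pi_mono => /=; by rewrite -ltnS prednK.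
  - by apply: Pi_mono; rewrite hj0.
have t0 : (0 < t)%N by rewrite -hj0 ltn_ord.
have := claim t t0 (leqnn t).
rewrite (eq_bigl (fun _ => true)); last by move=> j; rewrite ltn_ord.
move=> hc; apply/negP => hP.
have : (Pi j0 <= pispan k w y j0)%MS.
  apply: submx_trans hc; rewrite sub_capmx submx_refl andbT; exact: hP.
move/mxrankS; rewrite hrank => h.
have := rank_pispan w y j0; have [_ h2] := hk1 y hj0; lia.
Qed.

Lemma Vc_proper c (w : draw F n t) : condc c -> ~~ (Pi c.1.2 <= Vc c w)%MS.
Proof.
case: c => [[x j] m] /= /andP [hm hj0].
case: ifP => [/eqP j0|jn0].
  case: ifP => hG.
    exact: key.
  rewrite submx0 -mxrank_eq0 hrank; have [h1 h2] := hk1 x j0; lia.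
apply/negP => /mxrankS; rewrite hrank.
have hr : (\rank (Vj w x j m) <= d (predI j) + m)%N.
  apply: leq_trans (mxrank_adds_leqif _ _).1 _; rewrite hrank leq_add2l.
  exact: rank_sum_gen.
have e : nat_of_ord j = (predI j).+1 by rewrite /= prednK // lt0n jn0.
have := hk2 x e; lia.
Qed.

Lemma bad_cover (w : draw F n t) : valid_draw Pi k w -> bad_draw k w ->
  exists c, condc c && (w c <= Vc c w)%MS.
Proof.
move=> vw /existsP [i /existsP [j hij]].
apply/existsP; apply: contraT => /existsPn hno.
have hG : forall y, Gd w y.
  move=> y; apply/andP; split.
    apply/forallP => j'; apply/forallP => m; apply/implyP => hm.
    by move: vw => /forallP /(_ y) /forallP /(_ j') /forallP /(_ m); rewrite hm.
  apply/forallP => j'; apply/forallP => m; apply/implyP => /andP [hj hm].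
  by have := hno (y, j', m); rewrite /condc /Vc eqn0Ngt hj /= hm.
pose j0 : 'I_t := Ordinal (leq_ltn_trans (leq0n _) (ltn_ord i)).
have hj0 : nat_of_ord j0 = 0%N by [].
have n0 : (0 < n)%N.
  have [h1 h2] := hk1 true hj0; have := rank_leq_col (Pi j0); rewrite hrank; lia.
pose m0 : 'I_n := Ordinal n0.
have hx : forall x, ~~ (w (x, j0, m0) <= Pall w (~~ x))%MS.
  move=> x; have := hno (x, j0, m0); rewrite /condc /Vc /= hG.
  by have [-> _] := hk1 x hj0.
have inx : forall x (i : 'I_t), (w (x, j0, m0) <= Pispan k w x i)%MS.
  move=> x i'; apply: (sumsmx_sup j0) => //; apply: (sumsmx_sup m0).
    by have [-> _] := hk1 x hj0.
  by rewrite genmxE.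
have sall : forall x (j : 'I_t), (Pispan k w x j <= Pall w x)%MS.
  by move=> x j'; apply/sumsmx_subP => j'' _; apply: (sumsmx_sup j'').
case/orP: hij => h.
  by move: (hx true); rewrite /= (submx_trans (inx true i) (submx_trans h (sall false j))).
by move: (hx false); rewrite /= (submx_trans (inx false j) (submx_trans h (sall true i))).
Qed.

Lemma card_bigcup_leq (I : finType) (T : finType) (A : I -> {set T}) :
  (#|\bigcup_i A i| <= \sum_i #|A i|)%N.
Proof.
elim/big_rec2: _ => [|i s X _ h]; first by rewrite cards0.
apply: leq_trans (leq_card_setU _ _).1 _; by rewrite leq_add2l.
Qed.

Lemma bound :
  (#|[set w : draw F n t | valid_draw Pi k w && bad_draw k w]| * #|F|
     <= #|{: bool * 'I_t * 'I_n}| * #|[set w : draw F n t | valid_draw Pi k w]|)%N.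
Proof.
set S := [set w : draw F n t | valid_draw Pi k w].
pose A c := [set w : draw F n t | valid_draw Pi k w && condc c && (w c <= Vc c w)%MS].
have h1 : [set w : draw F n t | valid_draw Pi k w && bad_draw k w] \subset \bigcup_c A c.
  apply/subsetP => w; rewrite inE => /andP [vw bw]; have [c hc] := bad_cover vw bw.
  by apply/bigcupP; exists c => //; rewrite inE vw.
have h2 : forall c, (#|A c| * #|F| <= #|S|)%N.
  move=> [[x j] m]; case hc: (condc (x, j, m)).
    have -> : A (x, j, m) = [set w | valid_draw Pi k w && (w (x, j, m) <= Vc (x, j, m) w)%MS].
      by apply/setP => w; rewrite !inE hc andbT.
    apply: count_coord => /=.
    - by move: hc => /andP [].
    - exact: Vc_dep.
    - move=> w; exact: (Vc_proper w hc).
  rewrite (_ : A (x, j, m) = set0) ?cards0 //; apply/setP => w; by rewrite !inE hc andbF.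
apply: leq_trans (leq_mul (leq_trans (subset_leq_card h1) (card_bigcup_leq A)) (leqnn _)) _.
rewrite (big_morph (fun x => x * #|F|)%N (fun a b => mulnDl a b #|F|) (mul0n _)).
apply: (@leq_trans (\sum_(c : bool * 'I_t * 'I_n) #|S|)%N); first by apply: leq_sum => c _; exact: h2.
by rewrite sum_nat_const.
Qed.
End Main.

Local Close Scope ring_scope.
Unset Implicit Arguments.

Theorem lemma4 (n t : nat) (d : 'I_t -> nat) (k : bool -> 'I_t -> nat)
  (hk1 : forall (x : bool) (j : 'I_t), nat_of_ord j = 0%N ->
           (1 <= k x j)%N /\ (k x j < d j)%N)
  (hk2 : forall (x : bool) (j j' : 'I_t), nat_of_ord j = j'.+1 ->
           (k x j <= d j - d j')%N) :
  exists C : rat, forall (F : finFieldType) (Pi : 'I_t -> 'M[F]_n),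
    (forall j : 'I_t, \rank (Pi j) = d j) ->
    (forall i j : 'I_t, (i < j)%N -> (Pi i < Pi j)%MS) ->
    (prob_bad Pi k <= C / (#|F|%:R))%R.
Proof.
exists (#|{: bool * 'I_t * 'I_n}|%:R)%R => F Pi hr hm.
have hb := @bound F n t d k Pi hk1 hk2 hr hm.
rewrite /prob_bad.
set a := #|[set w : draw F n t | _ && _]| in hb *.
set b := #|[set w : draw F n t | _]| in hb *.
have q0 : (0 < #|F|)%N by apply/card_gt0P; exists 0%R.
case: (posnP b) => [b0|bp].
  by rewrite b0 invr0 mulr0 divr_ge0 ?ler0n.
rewrite ler_pdivrMr ?ltr0n // mulrAC ler_pdivlMr ?ltr0n //.
by rewrite -!natrM ler_nat.
Qed.
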